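(* For a locally compact metrizable topological group $G$, $G$ is NSS if and only if $G$ is TAP.
   Context: $e$ is the neutral element; $\prod_{k=1}^n a_k=a_1\cdots a_n$. $G$ is NSS if some neighborhood of $e$ contains no nontrivial subgroup of $G$. A sequence $(g_n)$ in $G$ is hyper-multipliable if for every integer sequence $(m_n)$ the sequence $\left(\prod_{k=1}^n g_k^{m_k}\right)_n$ converges in $G$. A subset $A\subset G$ is absolutely productive if every sequence of pairwise distinct elements of $A$ is hyper-multipliable. $G$ is TAP if every absolutely productive subset of $G$ is finite. *)

(* Defs.v *)
From Stdlib Require Import Reals ZArith List Classical.
Open Scope R_scope.

Section TopGroup.
Context {G : Type} (mul : G -> G -> G) (inv : G -> G) (e : G)
        (opn : (G -> Prop) -> Prop).

Definition is_group : Prop :=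
  (forall x y z, mul x (mul y z) = mul (mul x y) z) /\
  (forall x, mul e x = x) /\ (forall x, mul x e = x) /\
  (forall x, mul (inv x) x = e) /\ (forall x, mul x (inv x) = e).

Definition is_topology : Prop :=
  opn (fun _ => True) /\ opn (fun _ => False) /\
  (forall U V, opn U -> opn V -> opn (fun x => U x /\ V x)) /\
  (forall F : (G -> Prop) -> Prop, (forall U, F U -> opn U) ->
     opn (fun x => exists U, F U /\ U x)).

(* continuity of multiplication G x G -> G (product topology) and inversion *)
Definition is_topological_group : Prop :=
  is_group /\ is_topology /\
  (forall x y W, opn W -> W (mul x y) ->
     exists U V, opn U /\ opn V /\ U x /\ V y /\
       (forall u v, U u -> V v -> W (mul u v))) /\
  (forall W, opn W -> opn (fun x => W (inv x))).

Definition is_metric (d : G -> G -> R) : Prop :=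
  (forall x y, 0 <= d x y) /\ (forall x y, d x y = 0 <-> x = y) /\
  (forall x y, d x y = d y x) /\
  (forall x y z, d x z <= d x y + d y z).

Definition metrizable : Prop :=
  exists d : G -> G -> R, is_metric d /\
    forall U, opn U <-> (forall x, U x -> exists eps, 0 < eps /\
                            forall y, d x y < eps -> U y).

Definition nbhd (x : G) (V : G -> Prop) : Prop :=
  exists U, opn U /\ U x /\ forall y, U y -> V y.

Definition compact (K : G -> Prop) : Prop :=
  forall F : (G -> Prop) -> Prop, (forall U, F U -> opn U) ->
    (forall x, K x -> exists U, F U /\ U x) ->
    exists l : list (G -> Prop), (forall U, In U l -> F U) /\
      (forall x, K x -> exists U, In U l /\ U x).

Definition locally_compact : Prop :=
  forall x, exists K, compact K /\ nbhd x K.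

Definition is_subgroup (H : G -> Prop) : Prop :=
  H e /\ (forall x y, H x -> H y -> H (mul x y)) /\ (forall x, H x -> H (inv x)).

Definition NSS : Prop :=
  exists V, nbhd e V /\
    forall H, is_subgroup H -> (forall x, H x -> V x) -> forall x, H x -> x = e.

Definition converges (s : nat -> G) (x : G) : Prop :=
  forall U, opn U -> U x -> exists N, forall n, (N <= n)%nat -> U (s n).

Fixpoint gpow (g : G) (n : nat) : G :=
  match n with O => e | S n => mul (gpow g n) g end.

Definition zpow (g : G) (m : Z) : G :=
  match m with
  | Z0 => e
  | Zpos p => gpow g (Pos.to_nat p)
  | Zneg p => inv (gpow g (Pos.to_nat p))
  end.

Fixpoint oprod (a : nat -> G) (n : nat) : G :=
  match n with O => e | S n => mul (oprod a n) (a n) end.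

(* sequences are indexed from 0: the n-th partial product (n >= 1) is
   oprod (fun k => zpow (g k) (m k)) n = g_0^{m_0} ... g_(n-1)^{m_(n-1)} *)
Definition hyper_multipliable (g : nat -> G) : Prop :=
  forall m : nat -> Z, exists x,
    converges (fun n => oprod (fun k => zpow (g k) (m k)) n) x.

Definition absolutely_productive (A : G -> Prop) : Prop :=
  forall g : nat -> G, (forall n, A (g n)) ->
    (forall i j, g i = g j -> i = j) -> hyper_multipliable g.

Definition finite_set (A : G -> Prop) : Prop :=
  exists l : list G, forall x, A x -> In x l.

Definition TAP : Prop :=
  forall A, absolutely_productive A -> finite_set A.

End TopGroup.

(* Main.v *)
Require Import Defs.
From Stdlib Require Import Reals ZArith List Classical Lia Lra ClassicalEpsilon FinFun.

Section Alg.
Context {G : Type} (mul : G -> G -> G) (inv : G -> G) (e : G).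
Hypothesis Hg : is_group mul inv e.

Lemma massoc x y z : mul x (mul y z) = mul (mul x y) z.
Proof. apply Hg. Qed.
Lemma mlid x : mul e x = x.
Proof. apply Hg. Qed.
Lemma mrid x : mul x e = x.
Proof. apply Hg. Qed.
Lemma mlinv x : mul (inv x) x = e.
Proof. apply Hg. Qed.
Lemma mrinv x : mul x (inv x) = e.
Proof. apply Hg. Qed.

Lemma inv_uniq c x : mul c x = e -> c = inv x.
Proof.
  intro H. rewrite <- (mrid c), <- (mrinv x), massoc, H, mlid. reflexivity.
Qed.

Lemma inv_mul a b : inv (mul a b) = mul (inv b) (inv a).
Proof.
  symmetry. apply inv_uniq.
  rewrite <- massoc, (massoc (inv a) a b), mlinv, mlid, mlinv. reflexivity.
Qed.

Lemma inv_e : inv e = e.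
Proof. symmetry. apply inv_uniq. apply mlid. Qed.

Lemma inv_inv x : inv (inv x) = x.
Proof. symmetry. apply inv_uniq. apply mrinv. Qed.

Lemma gpow_comm g n : mul (gpow mul e g n) g = mul g (gpow mul e g n).
Proof.
  induction n as [|n IH]; simpl. rewrite mlid, mrid; reflexivity.
  rewrite IH at 1. rewrite massoc. reflexivity.
Qed.

Lemma gpow1 g : gpow mul e g 1 = g.
Proof. simpl. apply mlid. Qed.

Definition cyc g y := exists n, y = gpow mul e g n \/ y = inv (gpow mul e g n).

Lemma cyc_mul_g g y : cyc g y -> cyc g (mul y g).
Proof.
  intros [n [H|H]]; subst.
  - exists (S n). left. reflexivity.
  - destruct n as [|k].
    + exists 1%nat. left. simpl. rewrite inv_e. reflexivity.
    + exists k. right. simpl. rewrite gpow_comm, inv_mul, <- massoc, mlinv, mrid. reflexivity.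
Qed.

Lemma cyc_mul_ig g y : cyc g y -> cyc g (mul y (inv g)).
Proof.
  intros [n [H|H]]; subst.
  - destruct n as [|k].
    + exists 1%nat. right. simpl. rewrite mlid, mlid. reflexivity.
    + exists k. left. simpl. rewrite <- massoc, mrinv, mrid. reflexivity.
  - exists (S n). right. simpl. rewrite gpow_comm, inv_mul. reflexivity.
Qed.

Lemma cyc_mul_gpow g n : forall y, cyc g y -> cyc g (mul y (gpow mul e g n)).
Proof.
  induction n as [|n IH]; intros y Hy; simpl.
  - rewrite mrid. exact Hy.
  - rewrite massoc. apply cyc_mul_g, IH, Hy.
Qed.

Lemma cyc_mul_igpow g n : forall y, cyc g y -> cyc g (mul y (inv (gpow mul e g n))).
Proof.
  induction n as [|n IH]; intros y Hy; simpl.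
  - rewrite inv_e, mrid. exact Hy.
  - rewrite inv_mul, massoc. apply IH, cyc_mul_ig, Hy.
Qed.

Lemma cyc_subgroup g : is_subgroup mul inv e (cyc g).
Proof.
  split; [|split].
  - exists 0%nat. left. reflexivity.
  - intros x y Hx [n [H|H]]; subst.
    + apply cyc_mul_gpow, Hx.
    + apply cyc_mul_igpow, Hx.
  - intros x [n [H|H]]; subst; exists n.
    + right. reflexivity.
    + left. apply inv_inv.
Qed.

Lemma zpow_cyc g z : cyc g (zpow mul inv e g z).
Proof.
  destruct z as [|p|p]; simpl.
  - exists 0%nat. left. reflexivity.
  - exists (Pos.to_nat p). left. reflexivity.
  - exists (Pos.to_nat p). right. reflexivity.
Qed.

Lemma cyc_zpow g y : cyc g y -> exists z, y = zpow mul inv e g z.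
Proof.
  intros [n [H|H]]; subst.
  - destruct n as [|k]. exists 0%Z. reflexivity.
    exists (Z.pos (Pos.of_succ_nat k)). simpl. rewrite SuccNat2Pos.id_succ. reflexivity.
  - destruct n as [|k]. exists 0%Z. simpl. apply inv_e.
    exists (Z.neg (Pos.of_succ_nat k)). simpl. rewrite SuccNat2Pos.id_succ. reflexivity.
Qed.

Lemma subgroup_zpow H g z : is_subgroup mul inv e H -> H g -> H (zpow mul inv e g z).
Proof.
  intros [H1 [H2 H3]] Hg0.
  assert (forall n, H (gpow mul e g n)) as Hn.
  { induction n; simpl; auto. }
  destruct z; simpl; auto.
Qed.

End Alg.

Section Top.
Context {G : Type} (mul : G -> G -> G) (inv : G -> G) (e : G)
        (opn : (G -> Prop) -> Prop).
Hypothesis Htg : is_topological_group mul inv e opn.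

Let Hg : is_group mul inv e := proj1 Htg.
Let Htop : is_topology opn := proj1 (proj2 Htg).
Let Hmc := proj1 (proj2 (proj2 Htg)).
Let Hic := proj2 (proj2 (proj2 Htg)).

Lemma opn_and U V : opn U -> opn V -> opn (fun x => U x /\ V x).
Proof. intros. apply Htop; auto. Qed.

Lemma conv_step p x U0 : converges opn p x -> opn U0 -> U0 e ->
  exists N, forall n, (N <= n)%nat -> U0 (mul (inv (p n)) (p (S n))).
Proof.
  intros Hc HU He.
  destruct (Hmc (inv x) x U0 HU) as [A [B [HA [HB [HAx [HBx HAB]]]]]].
  { rewrite (mlinv _ _ _ Hg); auto. }
  destruct (Hc (fun y => A (inv y) /\ B y)) as [N HN].
  { apply opn_and; auto. }
  { split; auto. }
  exists N. intros n Hn. apply HAB.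
  - apply (HN n Hn).
  - apply (HN (S n)). lia.
Qed.

Lemma infinite_seq (A : G -> Prop) : ~ finite_set A ->
  exists g : nat -> G, (forall n, A (g n)) /\ (forall i j, g i = g j -> i = j).
Proof.
  intro Hnf.
  assert (Hch : forall l : list G, exists x, A x /\ ~ In x l).
  { intro l. apply NNPP. intro Hn. apply Hnf. exists l. intros x Hx.
    apply NNPP. intro Hi. apply Hn. exists x. auto. }
  set (c := fun l => proj1_sig (constructive_indefinite_description _ (Hch l))).
  assert (Hc : forall l, A (c l) /\ ~ In (c l) l).
  { intro l. unfold c. destruct (constructive_indefinite_description _ (Hch l)). auto. }
  set (L := fix L n := match n with O => nil | S n => c (L n) :: L n end).
  exists (fun n => c (L n)). split.
  - intro n. apply Hc.
  - assert (Hin : forall i j, (i < j)%nat -> In (c (L i)) (L j)).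
    { intros i j Hij. induction Hij; simpl; auto. }
    intros i j Hij. destruct (Nat.lt_total i j) as [H|[H|H]]; auto.
    + exfalso. apply (proj2 (Hc (L j))). rewrite <- Hij. auto.
    + exfalso. apply (proj2 (Hc (L i))). rewrite Hij. auto.
Qed.

Lemma NSS_TAP : NSS mul inv e opn -> TAP mul inv e opn.
Proof.
  intros [V [[U0 [HU0 [HU0e HU0V]]] Htriv]] A HA.
  apply NNPP. intro Hnf.
  destruct (infinite_seq A Hnf) as [g [HgA Hginj]].
  assert (Hm : forall n, exists z : Z,
    (exists z', ~ U0 (zpow mul inv e (g n) z')) -> ~ U0 (zpow mul inv e (g n) z)).
  { intro n. destruct (classic (exists z', ~ U0 (zpow mul inv e (g n) z'))) as [[z' Hz']|Hn].
    - exists z'. auto.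
    - exists 0%Z. intro H; contradiction. }
  destruct (choice _ Hm) as [m Hmp].
  destruct (HA g HgA Hginj m) as [x Hx].
  destruct (conv_step _ x U0 Hx HU0 HU0e) as [N HN].
  assert (Htr : forall n, (N <= n)%nat -> g n = e).
  { intros n Hn. specialize (HN n Hn). simpl in HN.
    rewrite (massoc _ _ _ Hg), (mlinv _ _ _ Hg), (mlid _ _ _ Hg) in HN.
    assert (Hall : forall z, U0 (zpow mul inv e (g n) z)).
    { intro z. apply NNPP. intro Hz. apply (Hmp n); eauto. }
    apply (Htriv (cyc mul inv e (g n))).
    - apply cyc_subgroup; exact Hg.
    - intros y Hy. apply HU0V. destruct (cyc_zpow mul inv e Hg _ _ Hy) as [z ->]. apply Hall.
    - exists 1%nat. left. symmetry. apply (gpow1 _ _ _ Hg). }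
  assert (N = S N) by (apply Hginj; rewrite !Htr; auto).
  lia.
Qed.

End Top.

Section Prod.
Context {G : Type} (mul : G -> G -> G) (inv : G -> G) (e : G).
Hypothesis Hg : is_group mul inv e.

Definition lprod (l : list (nat * G)) : G := fold_right (fun p a => mul (snd p) a) e l.

Lemma lprod_app l1 l2 : lprod (l1 ++ l2) = mul (lprod l1) (lprod l2).
Proof.
  induction l1 as [|p l IH]; simpl.
  - rewrite (mlid _ _ _ Hg). reflexivity.
  - rewrite IH, (massoc _ _ _ Hg). reflexivity.
Qed.

Lemma key_prod (W : nat -> G -> Prop)
  (Wcube : forall n a b c, W (S n) a -> W (S n) b -> W (S n) c -> W n (mul a (mul b c)))
  (Wdec : forall n x, W (S n) x -> W n x)
  (We : forall n, W n e) :
  forall M J l, NoDup (map fst l) ->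
    (forall p, In p l -> (J < fst p <= J + M)%nat /\ W (fst p) (snd p)) ->
    W J (lprod l).
Proof.
  induction M as [|M IH]; intros J l Hnd Hl.
  - destruct l as [|p l]. apply We.
    exfalso. destruct (Hl p) as [H _]; simpl; auto. lia.
  - destruct (classic (exists x, In (S J, x) l)) as [[x Hx]|Hn].
    + destruct (in_split _ _ Hx) as [L [R ->]].
      rewrite map_app in Hnd. simpl in Hnd.
      pose proof (NoDup_remove_1 _ _ _ Hnd) as Hnd'.
      pose proof (NoDup_remove_2 _ _ _ Hnd) as Hni.
      rewrite lprod_app. simpl.
      apply Wcube.
      * apply IH. eapply NoDup_app_remove_r; eauto.
        intros p Hp. destruct (Hl p) as [H1 H2]. apply in_or_app; auto.
        split; auto. assert (fst p <> S J).
        { intro E. apply Hni. apply in_or_app. left. rewrite <- E. apply in_map; auto. }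
        lia.
      * destruct (Hl (S J, x)) as [_ H2]. apply in_or_app; simpl; auto. exact H2.
      * apply IH. eapply NoDup_app_remove_l; eauto.
        intros p Hp. destruct (Hl p) as [H1 H2]. apply in_or_app; simpl; auto.
        split; auto. assert (fst p <> S J).
        { intro E. apply Hni. apply in_or_app. right. rewrite <- E. apply in_map; auto. }
        lia.
    + apply Wdec. apply IH; auto.
      intros p Hp. destruct (Hl p Hp) as [H1 H2]. split; auto.
      assert (fst p <> S J).
      { intro E. apply Hn. exists (snd p). rewrite <- E. destruct p; auto. }
      lia.
Qed.

Lemma oprod_split (f : nat -> G) (idx : nat -> nat) k n :
  oprod mul e f (k + n) = mul (oprod mul e f k) (lprod (map (fun i => (idx i, f i)) (seq k n))).
Proof.
  induction n as [|n IH].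
  - simpl. rewrite Nat.add_0_r, (mrid _ _ _ Hg). reflexivity.
  - rewrite Nat.add_succ_r, seq_S. simpl. rewrite IH, map_app, lprod_app. simpl.
    rewrite (mrid _ _ _ Hg), (massoc _ _ _ Hg). reflexivity.
Qed.

End Prod.

Lemma small_inv eps : 0 < eps -> exists j : nat, / (INR j + 1) < eps.
Proof.
  intro He. destruct (archimed (/ eps)) as [H1 H2].
  assert (0 < / eps) by (apply Rinv_0_lt_compat; auto).
  exists (Z.to_nat (up (/ eps))).
  rewrite INR_IZR_INZ, Z2Nat.id.
  2:{ apply le_IZR. lra. }
  rewrite <- (Rinv_inv eps) at 2.
  apply Rinv_lt_contravar.
  - apply Rmult_lt_0_compat; lra.
  - lra.
Qed.

Lemma inj_eventually (s : nat -> nat) : (forall i j, s i = s j -> i = j) ->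
  forall J, exists K, forall i, (K <= i)%nat -> (J <= s i)%nat.
Proof.
  intros Hs J. induction J as [|J [K HK]].
  - exists 0%nat. intros; lia.
  - destruct (classic (exists i0, s i0 = J)) as [[i0 Hi0]|Hn].
    + exists (Nat.max K (S i0)). intros i Hi.
      assert (J <= s i)%nat by (apply HK; lia).
      assert (s i <> J). { intro E. assert (i = i0) by (apply Hs; congruence). lia. }
      lia.
    + exists K. intros i Hi. assert (J <= s i)%nat by (apply HK; lia).
      assert (s i <> J) by (intro E; apply Hn; eauto). lia.
Qed.

Lemma list_bound (l : list nat) : exists B, forall x, In x l -> (x <= B)%nat.
Proof.
  induction l as [|a l [B HB]]. exists 0%nat; simpl; tauto.
  exists (Nat.max a B). intros x [H|H]; subst. lia. specialize (HB x H). lia.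
Qed.

Section Main.
Context {G : Type} (mul : G -> G -> G) (inv : G -> G) (e : G)
        (opn : (G -> Prop) -> Prop).
Hypothesis Htg : is_topological_group mul inv e opn.
Variable d : G -> G -> R.
Hypothesis Hd : is_metric d.
Hypothesis Hmo : forall U, opn U <-> (forall x, U x -> exists eps, 0 < eps /\
                            forall y, d x y < eps -> U y).
Variable K : G -> Prop.
Hypothesis HK : Defs.compact opn K.
Variable W0 : G -> Prop.
Hypothesis HW0 : opn W0.
Hypothesis HW0e : W0 e.
Hypothesis HW0K : forall y, W0 y -> K y.
Hypothesis HnNSS : ~ NSS mul inv e opn.

Let Hg : is_group mul inv e := proj1 Htg.
Let Htop : is_topology opn := proj1 (proj2 Htg).
Let Hmc := proj1 (proj2 (proj2 Htg)).

Lemma opn_and' U V : opn U -> opn V -> opn (fun x => U x /\ V x).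
Proof. intros. apply Htop; auto. Qed.

Lemma ball_open r : opn (fun y => d e y < r).
Proof.
  apply Hmo. intros x Hx. exists (r - d e x). split. lra.
  intros y Hy. destruct Hd as [_ [_ [_ Ht]]]. specialize (Ht e x y). lra.
Qed.

Lemma open_ball U : opn U -> U e -> exists eps, 0 < eps /\ forall y, d e y < eps -> U y.
Proof. intros HU He. apply (proj1 (Hmo U) HU e He). Qed.

Lemma sq_nbhd W : opn W -> W e -> exists W1, opn W1 /\ W1 e /\
  forall a b, W1 a -> W1 b -> W (mul a b).
Proof.
  intros HW He.
  destruct (Hmc e e W HW) as [U [V [HU [HV [HUe [HVe HUV]]]]]].
  { rewrite (mlid _ _ _ Hg). auto. }
  exists (fun x => U x /\ V x). split. apply opn_and'; auto. split; auto.
  intros a b [Ha _] [_ Hb]. auto.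
Qed.

Lemma cube_nbhd W : opn W -> W e -> exists W1, opn W1 /\ W1 e /\
  forall a b c, W1 a -> W1 b -> W1 c -> W (mul a (mul b c)).
Proof.
  intros HW He.
  destruct (sq_nbhd W HW He) as [W1 [HW1 [HW1e H1]]].
  destruct (sq_nbhd W1 HW1 HW1e) as [W2 [HW2 [HW2e H2]]].
  exists W2. split; auto. split; auto.
  intros a b c Ha Hb Hc. apply H1; auto.
  rewrite <- (mrid _ _ _ Hg a). apply H2; auto.
Qed.

Lemma nontriv W : opn W -> W e -> exists h, h <> e /\ forall z, W (zpow mul inv e h z).
Proof.
  intros HW He. apply NNPP. intro Hn. apply HnNSS.
  exists W. split. exists W. auto.
  intros H HH HHW x Hx. apply NNPP. intro Hxe. apply Hn.
  exists x. split; auto. intro z. apply HHW. apply subgroup_zpow; auto.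
Qed.

Definition St := ((G -> Prop) * R * G)%type.
Definition Good (s : St) := opn (fst (fst s)) /\ fst (fst s) e /\ 0 < snd (fst s).
Definition Rel (n : nat) (s s' : St) :=
  Good s -> Good s' /\
  (forall a b c, fst (fst s') a -> fst (fst s') b -> fst (fst s') c ->
       fst (fst s) (mul a (mul b c))) /\
  (forall y, fst (fst s') y -> d e y < snd (fst s) /\ d e y < / (INR n + 1)) /\
  snd s' <> e /\ (forall z, fst (fst s') (zpow mul inv e (snd s') z)) /\
  snd (fst s') = d e (snd s').

Lemma rel_total (p : nat * St) : exists s', Rel (fst p) (snd p) s'.
Proof.
  destruct p as [n [[W r] h0]]. simpl.
  destruct (classic (Good (W, r, h0))) as [Hgd|Hgd].
  2:{ exists (W, r, h0). intro; contradiction. }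
  destruct Hgd as [HW [He Hr]]. simpl in *.
  destruct (cube_nbhd W HW He) as [W1 [HW1 [HW1e Hc]]].
  set (W' := fun y => (W1 y /\ d e y < r) /\ d e y < / (INR n + 1)).
  assert (HW' : opn W').
  { apply opn_and'. apply opn_and'; auto. apply ball_open. apply ball_open. }
  assert (Hd0 : d e e = 0) by (apply Hd; auto).
  assert (HW'e : W' e).
  { unfold W'. rewrite Hd0. repeat split; auto.
    apply Rinv_0_lt_compat. pose proof (pos_INR n). lra. }
  destruct (nontriv W' HW' HW'e) as [h [Hh Hhz]].
  exists (W', d e h, h). intros _. simpl.
  split; [|split; [|split; [|split]]]; auto.
  - split; auto. split; auto. destruct Hd as [H1 [H2 _]].
    destruct (H1 e h); auto. exfalso. apply Hh. symmetry. apply H2. auto.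
  - intros a b c [[Ha _] _] [[Hb _] _] [[Hc' _] _]. auto.
  - intros y [[_ H1] H2]. auto.
Qed.

Lemma tap_contra : TAP mul inv e opn -> False.
Proof.
  intro HTAP.
  destruct (choice _ rel_total) as [F HF].
  set (T := fix T n := match n with O => (W0, 1, e) | S n => F (n, T n) end).
  assert (HGood : forall n, Good (T n)).
  { induction n as [|n IH]. split; simpl; auto. split; auto. lra.
    simpl. apply (HF (n, T n)). exact IH. }
  set (Wn := fun n => fst (fst (T n))).
  set (rn := fun n => snd (fst (T n))).
  set (h := fun n => snd (T (S n))).
  assert (HR : forall n, Rel n (T n) (T (S n))) by (intro n; apply (HF (n, T n))).
  assert (P1 : forall n a b c, Wn (S n) a -> Wn (S n) b -> Wn (S n) c -> Wn n (mul a (mul b c))).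
  { intros n. apply (HR n (HGood n)). }
  assert (P2 : forall n y, Wn (S n) y -> d e y < rn n /\ d e y < / (INR n + 1)).
  { intros n. apply (HR n (HGood n)). }
  assert (P3 : forall n, h n <> e) by (intro n; apply (HR n (HGood n))).
  assert (P4 : forall n z, Wn (S n) (zpow mul inv e (h n) z)) by (intro n; apply (HR n (HGood n))).
  assert (P5 : forall n, rn (S n) = d e (h n)) by (intro n; apply (HR n (HGood n))).
  assert (We : forall n, Wn n e) by (intro n; apply (HGood n)).
  assert (Wdec : forall n x, Wn (S n) x -> Wn n x).
  { intros n x Hx. rewrite <- (mrid _ _ _ Hg x), <- (mrid _ _ _ Hg e). apply P1; auto. }
  assert (Wdec' : forall (k n : nat) x, Wn (k + n)%nat x -> Wn n x).
  { induction k; simpl; auto. }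
  assert (Hh1 : forall n, Wn (S n) (h n)).
  { intro n. specialize (P4 n 1%Z). simpl in P4. rewrite (mlid _ _ _ Hg) in P4. exact P4. }
  assert (Hinj : forall i j, h i = h j -> i = j).
  { assert (forall i j, (i < j)%nat -> h i <> h j).
    { intros i j Hij E. assert (Wn (S (S i)) (h j)).
      { apply (Wdec' (j - S i)%nat). replace (j - S i + S (S i))%nat with (S j) by lia. auto. }
      destruct (P2 (S i) (h j) H) as [H1 _]. rewrite P5, E in H1. lra. }
    intros i j E. destruct (Nat.lt_total i j) as [H'|[H'|H']]; auto.
    exfalso; eapply H; eauto. exfalso; eapply H; eauto. }
  assert (HAP : absolutely_productive mul inv e opn (fun x => exists j, x = h j)).
  { intros g HgA Hginj m.
    destruct (choice _ HgA) as [s Hs].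
    assert (Hsinj : forall i j, s i = s j -> i = j).
    { intros i j E. apply Hginj. rewrite (Hs i), (Hs j), E. reflexivity. }
    set (f := fun k => zpow mul inv e (g k) (m k)).
    set (p := fun n => oprod mul e f n).
    assert (Htail : forall k n J, (forall i, (k <= i)%nat -> (J <= s i)%nat) ->
              Wn J (lprod mul e (map (fun i => (S (s i), f i)) (seq k n)))).
    { intros k n J HJ.
      destruct (list_bound (map (fun i => S (s i)) (seq k n))) as [B HB].
      apply (key_prod mul inv e Hg Wn P1 Wdec We B).
      - rewrite map_map. simpl. apply FinFun.Injective_map_NoDup.
        + intros a b E. apply Hsinj. lia.
        + apply seq_NoDup.
      - intros q Hq. apply in_map_iff in Hq. destruct Hq as [i [Ei Hi]]. subst q. simpl.
        apply in_seq in Hi.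
        assert (S (s i) <= B)%nat.
        { apply HB. apply in_map_iff. exists i. split; auto. apply in_seq. auto. }
        split. specialize (HJ i (proj1 Hi)). lia.
        unfold f. rewrite (Hs i). apply P4. }
    assert (HpK : forall n, K (p n)).
    { intro n. apply HW0K. unfold p. change n with (0 + n)%nat.
      rewrite (oprod_split mul inv e Hg f (fun i => S (s i)) 0 n). simpl.
      rewrite (mlid _ _ _ Hg). apply (Htail 0%nat n 0%nat). intros; lia. }
    assert (Hcl : exists x, forall U, opn U -> U x -> forall N, exists n, (N <= n)%nat /\ U (p n)).
    { apply NNPP. intro Hn.
      set (Fm := fun U => opn U /\ exists N, forall n, (N <= n)%nat -> ~ U (p n)).
      destruct (HK Fm) as [l [Hl1 Hl2]].
      - intros U [HU _]. auto.
      - intros x _. apply NNPP. intro Hx. apply Hn. exists x.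
        intros U HU HUx N. apply NNPP. intro HN. apply Hx. exists U. split; auto.
        split; auto. exists N. intros n Hn' HUn. apply HN. exists n. auto.
      - assert (Hb : exists N, forall U, In U l -> forall n, (N <= n)%nat -> ~ U (p n)).
        { clear Hl2. induction l as [|U l IH].
          - exists 0%nat. simpl. tauto.
          - destruct IH as [N HN]. intros; apply Hl1; simpl; auto.
            destruct (Hl1 U) as [_ [N' HN']]. simpl; auto.
            exists (Nat.max N N'). intros V [E|HV] n Hnn.
            + subst. apply HN'. lia.
            + apply (HN V HV). lia. }
        destruct Hb as [N HN].
        destruct (Hl2 (p N) (HpK N)) as [U [HUl HU]].
        apply (HN U HUl N); auto. }
    destruct Hcl as [x Hx]. exists x.
    intros U HU HUx.
    destruct (Hmc x e U HU) as [A' [B' [HA' [HB' [HA'x [HB'e HAB]]]]]].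
    { rewrite (mrid _ _ _ Hg). auto. }
    destruct (open_ball B' HB' HB'e) as [eps [Heps HBe]].
    destruct (small_inv eps Heps) as [j Hj].
    destruct (inj_eventually s Hsinj (S j)) as [K0 HK0].
    destruct (Hx A' HA' HA'x K0) as [k [Hk HpA]].
    exists k. intros n Hn.
    replace n with (k + (n - k))%nat by lia.
    change (U (oprod mul e f (k + (n - k)))).
    rewrite (oprod_split mul inv e Hg f (fun i => S (s i)) k (n - k)).
    apply HAB. exact HpA.
    apply HBe. eapply Rlt_trans; [apply (P2 j)|exact Hj].
    apply (Htail k (n - k)%nat (S j)). intros i Hi. apply HK0. lia. }
  destruct (HTAP _ HAP) as [l Hl].
  assert (Hlen := NoDup_incl_length (l := map h (seq 0 (S (length l)))) (l' := l)).
  rewrite length_map, length_seq in Hlen.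
  assert (S (length l) <= length l)%nat; [|lia].
  apply Hlen.
  - apply FinFun.Injective_map_NoDup. exact Hinj. apply seq_NoDup.
  - intros y Hy. apply in_map_iff in Hy. destruct Hy as [i [<- _]]. apply Hl. eauto.
Qed.

End Main.

Theorem corollary5p6 (G : Type) (mul : G -> G -> G) (inv : G -> G) (e : G)
    (opn : (G -> Prop) -> Prop)
    (Htg : is_topological_group mul inv e opn)
    (Hmet : metrizable opn)
    (Hlc : locally_compact opn) :
  NSS mul inv e opn <-> TAP mul inv e opn.
Proof.
  split.
  - apply NSS_TAP. exact Htg.
  - intro HTAP. apply NNPP. intro HnNSS.
    destruct Hmet as [d [Hd Hmo]].
    destruct (Hlc e) as [K [HK [W0 [HW0 [HW0e HW0K]]]]].
    exact (tap_contra mul inv e opn Htg d Hd Hmo K HK W0 HW0 HW0e HW0K HnNSS HTAP).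
Qed.
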